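(* Let $c\in(0,1)$ and let $\sigma>0$ satisfy $C_{\mathrm{BS}}(\sigma)=c$. Define $$U_{23}(c)=H\!\left(\min\left(\frac{1+c}{2},\; c+e^k\,\Phi(-\sqrt{2k})\right)\right).$$ Then $\sigma\le U_{23}(c)$. Moreover, with $U_3(c)=-\Phi^{-1}\!\left(\frac{1-c}{2}\right)-\Phi^{-1}\!\left(\frac{1-c}{2e^k}\right)$ and, for $0<c<1-e^k\Phi(-\sqrt{2k})$, $U_2(c)=\Phi^{-1}\!\left(c+e^k\Phi(-\sqrt{2k})\right)+\sqrt{2k}$, one has $U_{23}(c)=\min(U_2(c),U_3(c))$ whenever $U_2(c)$ is defined, and $U_{23}(c)=U_3(c)$ otherwise.
   Context: Fix $k\ge 0$. Let $\Phi$ and $\phi$ denote the standard normal distribution function and density. For $\sigma>0$ put $d_1(\sigma)=-k/\sigma+\sigma/2$, $d_2(\sigma)=-k/\sigma-\sigma/2$, and $C_{\mathrm{BS}}(\sigma)=\Phi(d_1(\sigma))-e^k\,\Phi(d_2(\sigma))$. The map $C_{\mathrm{BS}}$ is a strictly increasing bijection from $(0,\infty)$ onto $(0,1)$; for $c\in(0,1)$ the implied volatility is the unique $\sigma>0$ with $C_{\mathrm{BS}}(\sigma)=c$. For $c<\mathcal D<1$ define $H(\mathcal D)=\Phi^{-1}(\mathcal D)-\Phi^{-1}\!\left(\frac{\mathcal D-c}{e^k}\right)$. *)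

(* Defs.v *)
From Stdlib Require Import Reals Lra ClassicalEpsilon.
From Coquelicot Require Import Coquelicot.
Open Scope R_scope.

Definition npdf (x : R) : R := exp (- (x ^ 2) / 2) / sqrt (2 * PI).

Definition Phi (x : R) : R := RInt_gen npdf (Rbar_locally m_infty) (at_point x).

(* inverse of Phi: the (unique, for p in (0,1)) y with Phi y = p *)
Definition Phi_inv (p : R) : R := epsilon (inhabits 0) (fun y => Phi y = p).

Definition d1 (k s : R) : R := - k / s + s / 2.
Definition d2 (k s : R) : R := - k / s - s / 2.

(* normalized Black-Scholes call price with log-moneyness k *)
Definition C_BS (k s : R) : R := Phi (d1 k s) - exp k * Phi (d2 k s).

Definition H (k c D : R) : R := Phi_inv D - Phi_inv ((D - c) / exp k).

Definition U23 (k c : R) : R :=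
  H k c (Rmin ((1 + c) / 2) (c + exp k * Phi (- sqrt (2 * k)))).

Definition U3 (k c : R) : R :=
  - Phi_inv ((1 - c) / 2) - Phi_inv ((1 - c) / (2 * exp k)).

(* meaningful for 0 < c < 1 - e^k Phi(-sqrt(2k)) *)
Definition U2 (k c : R) : R :=
  Phi_inv (c + exp k * Phi (- sqrt (2 * k))) + sqrt (2 * k).

(* Main.v *)
From Stdlib Require Import Reals Lra.

Module MCBridge.
From HB Require Import structures.
From mathcomp Require Import all_ssreflect_compat ssralg ssrnum archimedean interval.
From mathcomp Require Import boolp classical_sets reals interval_inference ereal.
From mathcomp Require Import topology normedtype sequences realfun derive exp trigo.
From mathcomp Require Import measure lebesgue_measure lebesgue_integral ftc gauss_integral.
From mathcomp Require Import Rstruct Rstruct_topology.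

Set Implicit Arguments. Unset Strict Implicit. Unset Printing Implicit Defensive.
Import Order.TTheory GRing.Theory Num.Theory.
Import numFieldNormedType.Exports.
Local Open Scope classical_set_scope.
Local Open Scope ring_scope.
HB.instance Definition _ := NormedModule.copy Rdefinitions.R (Rdefinitions.R^o).

Lemma std_is_derive (f : R -> R) (x l : R) :
  derivable_pt_lim f x l -> is_derive x 1 f l.
Proof.
move=> H.
have C : (fun h : R => h^-1 * (f (h + x) - f x)) @ 0^' --> l.
  apply/cvgrPdist_lt => e /RltP e0.
  have [d Hd] := H e e0.
  rewrite /prop_near1 /dnbhs /within /=.
  apply/nbhs_ballP; exists (pos d) => /=; first by apply/RltP; case: d {Hd}.
  move=> h; rewrite /ball /= sub0r normrN => /RltP hd hn0.
  have hn0' : h <> 0 by apply/eqP.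
  have /RltP := Hd h hn0' hd.
  rewrite /= RabsE => K; by rewrite (addrC h x) mulrC distrC.
have E : (fun h : R => h^-1 *: ((f \o shift x) (h *: (1:R^o)) - f x)) = (fun h : R => h^-1 * (f (h + x) - f x)).
  by apply/funext => h; rewrite /= [h%:A]mulr1.
apply: DeriveDef; rewrite /derivable /derive /= E.
  by apply/cvg_ex; exists l.
exact: cvg_lim.
Qed.

Lemma PIE : PI = pi :> R.
Proof.
have Hs (x : R) : is_derive x 1 Ratan.atan ((1 + x ^+ 2)^-1).
  apply: std_is_derive.
  have := derivable_pt_lim_atan x.
  by rewrite /Rsqr /Rdiv RealsE RpowE.
have Hm (x : R) : is_derive x 1 (@atan R) ((1 + x ^+ 2)^-1).
  apply: DeriveDef; first exact: derivable_atan.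
  by rewrite -derive1E derive1_atan.
pose g := (fun y : R => Ratan.atan y - @atan R y).
have Hg (x : R) : is_derive x 1 g 0.
  rewrite -(subrr ((1 + x ^+ 2)^-1)); exact: (is_deriveB (Hs x) (Hm x)).
have gc : {within `[0, 1], continuous g}.
  by apply: derivable_within_continuous => x _; exact: (@ex_derive _ _ _ _ _ _ _ (Hg x)).
have [c _ Hc] := @MVT R g (fun _ => 0) 0 1 ltr01 (fun x _ => Hg x) gc.
move: Hc; rewrite mul0r /g /= atan1 atan0 atan_1 atan_0 subrr subr0 => /eqP.
rewrite subr_eq0 => /eqP.
rewrite -INRE => E.
have E' : Rdiv PI 4 = Rdiv pi (INR 4) by exact: E.
simpl INR in E'. lra.
Qed.

Lemma gauss_bridge (F : R -> R) :
  (forall x, derivable_pt_lim F x (Rtrigo_def.exp (- (x * x)))) -> F (IZR 0) = IZR 0 ->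
  forall eps, Rlt 0 eps -> exists M, forall x, Rlt M x ->
    Rlt (Rabs (F x * F x - PI / 4)) eps.
Proof.
move=> HF F0 eps /RltP eps0.
have HD (x : R) : is_derive x 1 F (gauss_fun x).
  by apply: std_is_derive; rewrite /gauss_fun -RexpE expr2; exact: HF.
have Fc (x : R) : {for x, continuous F}.
  apply/continuity_ptE; apply: derivable_continuous_pt.
  exact: (exist _ _ (HF x)).
have IF (b : R) : 0 < b -> gauss_integral_proof.integral0_gauss b = F b.
  move=> b0.
  have h1 : {within `[0, b], continuous gauss_fun}.
    exact: continuous_subspaceT continuous_gauss_fun.
  have h2 : derivable_oo_LRcontinuous F 0 b.
    split.
    + by move=> x _; exact: (@ex_derive _ _ _ _ _ _ _ (HD x)).
    + exact: cvg_at_right_filter (Fc 0).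
    + exact: cvg_at_left_filter (Fc b).
  have h3 : forall x, x \in (Interval (BRight 0) (BLeft b)) -> derive1 F x = gauss_fun x.
    by move=> x _; rewrite derive1E; exact: derive_val.
  have E := @continuous_FTC2 R gauss_fun F 0 b b0 h1 h2 h3.
  rewrite /gauss_integral_proof.integral0_gauss /Rintegral E F0 -EFinB /=.
  by rewrite subr0.
have := @gauss_integral_proof.cvg_integral0_gauss_sqr R.
move/cvgrPdist_lt => /(_ eps eps0) [M [Mr HM]].
exists (Num.max M 0) => x /RltP; rewrite gt_max => /andP[Mx x0].
have := HM x Mx; rewrite IF // -PIE distrC => H.
have h4 : (4%:R : R) = IZR 4 by rewrite -INRE /=; ring.
by apply/RltP; rewrite RabsE expr2 h4 in H *.
Qed.

End MCBridge.


From Stdlib Require Import Reals Lra ClassicalEpsilon.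
From Coquelicot Require Import Coquelicot.
Require Import Defs.
Open Scope R_scope.
Open Scope R_scope.

Lemma sqrt2PI_pos : 0 < sqrt (2 * PI).
Proof. apply sqrt_lt_R0; generalize PI_RGT_0; lra. Qed.

Lemma npdf_pos x : 0 < npdf x.
Proof. unfold npdf. apply Rdiv_lt_0_compat; [apply exp_pos | apply sqrt2PI_pos]. Qed.

Lemma npdf_even x : npdf (- x) = npdf x.
Proof. unfold npdf. f_equal. f_equal. field. Qed.

Lemma npdf_deriv x : ex_derive npdf x.
Proof.
  unfold npdf. auto_derive. generalize sqrt2PI_pos; lra.
Qed.

Lemma npdf_cont x : continuous npdf x.
Proof. exact (ex_derive_continuous npdf x (npdf_deriv x)). Qed.

Definition N (x : R) : R := RInt npdf 0 x.

Lemma ex_RInt_npdf a b : ex_RInt npdf a b.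
Proof. exact (ex_RInt_continuous npdf a b (fun z _ => npdf_cont z)). Qed.

Lemma N_deriv x : is_derive N x (npdf x).
Proof.
  apply is_derive_RInt with (a := 0).
  - apply filter_forall. intros b. exact (RInt_correct npdf 0 b (ex_RInt_npdf 0 b)).
  - apply npdf_cont.
Qed.

Lemma deriv_mono (f df : R -> R) a b : a <= b ->
  (forall x, is_derive f x (df x)) -> (forall x, continuous df x) ->
  (forall x, a <= x <= b -> 0 <= df x) -> f a <= f b.
Proof.
  intros ab Hd Hc Hs.
  assert (E : RInt (Derive f) a b = f b - f a).
  { apply RInt_Derive.
    - intros x _. eexists; apply Hd.
    - intros x _. apply continuous_ext with df.
      + intros y; symmetry; apply is_derive_unique, Hd.
      + apply Hc. }
  assert (E2 : RInt (Derive f) a b = RInt df a b).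
  { apply RInt_ext. intros x _. apply is_derive_unique, Hd. }
  assert (0 <= RInt df a b).
  { apply RInt_ge_0; auto.
    - exact (ex_RInt_continuous df a b (fun z _ => Hc z)).
    - intros x Hx; apply Hs; lra. }
  lra.
Qed.

Lemma deriv_anti (f df : R -> R) a b : a <= b ->
  (forall x, is_derive f x (df x)) -> (forall x, continuous df x) ->
  (forall x, a <= x <= b -> df x <= 0) -> f b <= f a.
Proof.
  intros ab Hd Hc Hs.
  assert (- f a <= - f b); [|lra].
  apply (deriv_mono (fun x => - f x) (fun x => - df x)); auto.
  - intros x. apply (is_derive_opp f x (df x)), Hd.
  - intros x. apply (continuous_opp df x), Hc.
  - intros x Hx. specialize (Hs x Hx). lra.
Qed.

Lemma N0 : N 0 = 0.
Proof. unfold N. exact (RInt_point 0 npdf). Qed.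

Lemma N_odd x : N (- x) = - N x.
Proof.
  set (g := fun y => N y + N (- y)).
  assert (Hg : forall y, is_derive g y 0).
  { intros y. unfold g.
    replace 0 with (npdf y + (-1) * npdf (- y)) by (rewrite npdf_even; ring).
    apply (is_derive_plus N (fun y => N (-y))). apply N_deriv.
    apply (is_derive_comp N (fun y => - y) y (npdf (- y)) (-1)).
    apply N_deriv. auto_derive; auto; ring. }
  assert (Hc : forall y : R, continuous (fun _ => 0) y) by (intros; apply continuous_const).
  destruct (Rle_dec 0 x) as [H|H].
  - assert (g 0 <= g x) by (apply (deriv_mono g (fun _ => 0)); auto; intros; lra).
    assert (g x <= g 0) by (apply (deriv_anti g (fun _ => 0)); auto; intros; lra).
    unfold g in *. rewrite Ropp_0, N0 in *. lra.
  - assert (g x <= g 0) by (apply (deriv_mono g (fun _ => 0)); auto; try lra; intros; lra).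
    assert (g 0 <= g x) by (apply (deriv_anti g (fun _ => 0)); auto; try lra; intros; lra).
    unfold g in *. rewrite Ropp_0, N0 in *. lra.
Qed.

Lemma N_mono a b : a <= b -> N a <= N b.
Proof.
  intros ab. apply (deriv_mono N npdf); auto.
  - apply N_deriv.
  - apply npdf_cont.
  - intros x _. left; apply npdf_pos.
Qed.

Lemma F_deriv x :
  derivable_pt_lim (fun x => sqrt PI * N (sqrt 2 * x)) x (exp (- (x * x))).
Proof.
  apply is_derive_Reals.
  assert (H2 : is_derive (fun x : R => sqrt 2 * x) x (sqrt 2)).
  { auto_derive; auto; ring. }
  assert (H := is_derive_comp N (fun x => sqrt 2 * x) x _ _ (N_deriv (sqrt 2 * x)) H2).
  assert (H3 := is_derive_scal _ x (sqrt PI) _ H).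
  eapply is_derive_ext; [intros t; reflexivity|].
  replace (exp (- (x * x))) with (scal (sqrt PI) (scal (sqrt 2) (npdf (sqrt 2 * x)))).
  exact H3.
  unfold scal; simpl; unfold mult; simpl. unfold npdf.
  rewrite sqrt_mult by (try lra; generalize PI_RGT_0; lra).
  assert (s2 : sqrt 2 * sqrt 2 = 2) by (apply sqrt_sqrt; lra).
  assert (sp : 0 < sqrt PI) by (apply sqrt_lt_R0, PI_RGT_0).
  assert (s2p : 0 < sqrt 2) by (apply sqrt_lt_R0; lra).
  replace (- (sqrt 2 * x) ^ 2 / 2) with (- (x * x)).
  field; lra.
  replace ((sqrt 2 * x) ^ 2) with ((sqrt 2 * sqrt 2) * (x * x)) by ring.
  rewrite s2. field.
Qed.

Lemma N_lim : forall eps, 0 < eps -> exists M, forall y, M < y -> Rabs (N y - 1/2) < eps.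
Proof.
  intros eps Heps.
  set (F := fun x => sqrt PI * N (sqrt 2 * x)).
  assert (F0 : F (IZR 0) = IZR 0).
  { unfold F. rewrite Rmult_0_r, N0. ring. }
  assert (sp : 0 < sqrt PI) by (apply sqrt_lt_R0, PI_RGT_0).
  assert (s2p : 0 < sqrt 2) by (apply sqrt_lt_R0; lra).
  assert (spp : sqrt PI * sqrt PI = PI) by (apply sqrt_sqrt; generalize PI_RGT_0; lra).
  destruct (@MCBridge.gauss_bridge F F_deriv F0 (eps * sqrt PI * (sqrt PI / 2)))
    as [M HM].
  { apply Rmult_lt_0_compat; [apply Rmult_lt_0_compat|]; lra. }
  exists (Rmax 0 (sqrt 2 * M)). intros y Hy.
  assert (y0 : 0 < y) by (eapply Rle_lt_trans; [apply Rmax_l|exact Hy]).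
  assert (yM : sqrt 2 * M < y) by (eapply Rle_lt_trans; [apply Rmax_r|exact Hy]).
  assert (s2 : sqrt 2 * sqrt 2 = 2) by (apply sqrt_sqrt; lra).
  set (x := y / sqrt 2).
  assert (Mx : M < x).
  { unfold x. apply Rmult_lt_reg_l with (sqrt 2); auto.
    replace (sqrt 2 * (y / sqrt 2)) with y by (field; lra). lra. }
  specialize (HM x Mx).
  assert (Fx : F x = sqrt PI * N y).
  { unfold F, x. f_equal. f_equal. field. lra. }
  rewrite Fx in HM.
  assert (Ny0 : 0 <= N y) by (rewrite <- N0; apply N_mono; lra).
  set (u := N y) in *.
  assert (E : sqrt PI * u * (sqrt PI * u) - PI / 4 =
              (sqrt PI * sqrt PI) * ((u - 1/2) * (u + 1/2))).
  { replace (PI / 4) with (sqrt PI * sqrt PI / 4) by (rewrite spp; reflexivity). field. }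
  rewrite E, (Rabs_mult (sqrt PI * sqrt PI)) in HM.
  rewrite (Rabs_right (sqrt PI * sqrt PI)) in HM by nra.
  rewrite (Rabs_mult (u - 1/2)) in HM.
  rewrite (Rabs_right (u + 1/2)) in HM by lra.
  assert (Rabs (u - 1/2) * (1/2) <= Rabs (u - 1/2) * (u + 1/2)).
  { apply Rmult_le_compat_l. apply Rabs_pos. lra. }
  assert (0 < sqrt PI * sqrt PI) by nra.
  assert (Rabs (u - 1 / 2) * (u + 1 / 2) < eps * (1/2)).
  { apply Rmult_lt_reg_l with (sqrt PI * sqrt PI); auto.
    replace (sqrt PI * sqrt PI * (eps * (1/2))) with (eps * sqrt PI * (sqrt PI / 2)) by field.
    lra. }
  nra.
Qed.

Definition P (x : R) : R := N x + 1/2.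

Lemma P_deriv x : is_derive P x (npdf x).
Proof.
  unfold P. replace (npdf x) with (npdf x + 0) by ring.
  apply (is_derive_plus N (fun _ => 1/2)). apply N_deriv. exact (@is_derive_const R_AbsRing R_NormedModule (1/2) x).
Qed.

Lemma P_lim_minf : forall eps, 0 < eps -> exists M, forall x, x < M -> Rabs (P x) < eps.
Proof.
  intros eps He. destruct (N_lim eps He) as [M HM].
  exists (- M). intros x Hx.
  unfold P. replace (N x + 1/2) with (- (N (- x) - 1/2)) by (rewrite N_odd; ring).
  rewrite Rabs_Ropp. apply HM. lra.
Qed.

Lemma Phi_eq x : Phi x = P x.
Proof.
  unfold Phi.
  apply is_RInt_gen_unique.
  assert (H : is_RInt_gen (Derive P) (Rbar_locally m_infty) (at_point x) (P x - 0)).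
  { apply is_RInt_gen_Derive.
    - exists (fun _ => True) (fun _ => True).
      + exists 0. auto.
      + unfold at_point. auto.
      + intros a b _ _ y _. eexists. apply P_deriv.
    - exists (fun _ => True) (fun _ => True).
      + exists 0. auto.
      + unfold at_point. auto.
      + intros a b _ _ y _. apply continuous_ext with npdf.
        * intros t. symmetry. apply is_derive_unique, P_deriv.
        * apply npdf_cont.
    - apply filterlim_locally. intros eps.
      destruct (P_lim_minf eps (cond_pos eps)) as [M HM].
      exists M. intros y Hy. specialize (HM y Hy).
      change (Rabs (P y - 0) < eps). rewrite Rminus_0_r. exact HM.
    - intros Q HQ. unfold filtermap, at_point. apply locally_singleton. exact HQ. }
  rewrite Rminus_0_r in H.
  eapply is_RInt_gen_ext; [| exact H].
  exists (fun _ => True) (fun _ => True).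
  + exists 0. auto.
  + unfold at_point. auto.
  + intros a b _ _ y _. apply is_derive_unique, P_deriv.
Qed.

Lemma Phi_deriv x : is_derive Phi x (npdf x).
Proof.
  eapply is_derive_ext; [intros t; symmetry; apply Phi_eq|]. apply P_deriv.
Qed.

Lemma Phi_sym x : Phi (- x) = 1 - Phi x.
Proof. rewrite !Phi_eq. unfold P. rewrite N_odd. field. Qed.

Lemma Phi_lt a b : a < b -> Phi a < Phi b.
Proof.
  intros ab. apply (incr_function Phi m_infty p_infty npdf); simpl; auto.
  - intros; apply Phi_deriv.
  - intros; apply npdf_pos.
Qed.

Lemma Phi_le a b : a <= b -> Phi a <= Phi b.
Proof. intros [H|H]. left; apply Phi_lt; auto. subst; lra. Qed.

Lemma Phi_le_inv a b : Phi a <= Phi b -> a <= b.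
Proof.
  intros H. destruct (Rle_dec a b) as [|n]; auto.
  assert (Phi b < Phi a) by (apply Phi_lt; lra). lra.
Qed.

Lemma Phi_lt_inv a b : Phi a < Phi b -> a < b.
Proof.
  intros H. destruct (Rlt_dec a b) as [|n]; auto.
  assert (Phi b <= Phi a) by (apply Phi_le; lra). lra.
Qed.

Lemma Phi_inj a b : Phi a = Phi b -> a = b.
Proof. intros H. apply Rle_antisym; apply Phi_le_inv; lra. Qed.

Lemma Phi_lim_minf : forall eps, 0 < eps -> exists M, forall x, x < M -> Phi x < eps.
Proof.
  intros eps He. destruct (P_lim_minf eps He) as [M HM].
  exists M. intros x Hx. rewrite Phi_eq. specialize (HM x Hx).
  apply Rabs_def2 in HM. lra.
Qed.

Lemma Phi_lim_pinf : forall eps, 0 < eps -> exists M, forall x, M < x -> 1 - eps < Phi x.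
Proof.
  intros eps He. destruct (Phi_lim_minf eps He) as [M HM].
  exists (- M). intros x Hx. specialize (HM (- x)). rewrite Phi_sym in HM.
  assert (1 - Phi x < eps) by (apply HM; lra). lra.
Qed.

Lemma Phi_nonneg x : 0 <= Phi x.
Proof.
  destruct (Rle_lt_dec 0 (Phi x)) as [H|H]; auto. exfalso.
  destruct (P_lim_minf (- Phi x)) as [M HM]; [lra|].
  set (z := Rmin M x - 1).
  assert (Phi z <= Phi x) by (apply Phi_le; unfold z; generalize (Rmin_r M x); lra).
  assert (Hz : Rabs (P z) < - Phi x) by (apply HM; unfold z; generalize (Rmin_l M x); lra).
  rewrite <- Phi_eq in Hz. apply Rabs_def2 in Hz. lra.
Qed.

Lemma Phi_pos x : 0 < Phi x.
Proof.
  assert (Phi (x - 1) < Phi x) by (apply Phi_lt; lra).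
  generalize (Phi_nonneg (x - 1)); lra.
Qed.

Lemma Phi_lt1 x : Phi x < 1.
Proof. generalize (Phi_pos (- x)). rewrite Phi_sym. lra. Qed.

Lemma Phi_cont : continuity Phi.
Proof.
  intros x. apply continuity_pt_filterlim.
  exact (ex_derive_continuous Phi x (ex_intro _ _ (Phi_deriv x))).
Qed.

Lemma Phi_surj p : 0 < p < 1 -> exists y, Phi y = p.
Proof.
  intros Hp.
  destruct (Phi_lim_minf p) as [M1 H1]; [lra|].
  destruct (Phi_lim_pinf (1 - p)) as [M2 H2]; [lra|].
  assert (A : Phi (M1 - 1) < p) by (apply H1; lra).
  assert (B : p < Phi (M2 + 1)) by (assert (1 - (1 - p) < Phi (M2 + 1)) by (apply H2; lra); lra).
  destruct (IVT_gen Phi (M1 - 1) (M2 + 1) p Phi_cont) as [y [_ Hy]].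
  - split.
    + eapply Rle_trans; [apply Rmin_l|lra].
    + eapply Rle_trans; [|apply Rmax_r]; lra.
  - exists y; exact Hy.
Qed.

Lemma Phi_inv_spec p : 0 < p < 1 -> Phi (Phi_inv p) = p.
Proof.
  intros Hp. unfold Phi_inv.
  apply (epsilon_spec (inhabits 0) (fun y => Phi y = p)).
  apply Phi_surj; auto.
Qed.

Lemma Phi_inv_Phi y : Phi_inv (Phi y) = y.
Proof.
  apply Phi_inj. apply Phi_inv_spec. split; [apply Phi_pos|apply Phi_lt1].
Qed.

Lemma Phi0 : Phi 0 = 1/2.
Proof. generalize (Phi_sym 0). rewrite Ropp_0. lra. Qed.

Lemma exp_le a b : a <= b -> exp a <= exp b.
Proof. intros [H|H]. left; apply exp_increasing; auto. subst; lra. Qed.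

Lemma npdf_shift k h t : exp k * npdf (t - h) = npdf t * exp (k + t * h - h * h / 2).
Proof.
  unfold npdf. unfold Rdiv.
  replace (exp k * (exp (- (t - h) ^ 2 * / 2) * / sqrt (2 * PI)))
    with (exp (k + - (t - h) ^ 2 * / 2) * / sqrt (2 * PI)) by (rewrite exp_plus; ring).
  replace (exp (- t ^ 2 * / 2) * / sqrt (2 * PI) * exp (k + t * h - h * h * / 2))
    with (exp (- t ^ 2 * / 2 + (k + t * h - h * h * / 2)) * / sqrt (2 * PI)) by (rewrite exp_plus; ring).
  f_equal. f_equal. field.
Qed.

Lemma df_cont k h t : continuous (fun t => npdf t - exp k * npdf (t - h)) t.
Proof.
  assert (H : ex_derive (fun t => npdf t - exp k * npdf (t - h)) t).
  { unfold npdf. auto_derive. generalize sqrt2PI_pos; lra. }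
  exact (ex_derive_continuous _ t H).
Qed.

Lemma f_deriv k h t :
  is_derive (fun t => Phi t - exp k * Phi (t - h)) t (npdf t - exp k * npdf (t - h)).
Proof.
  apply (is_derive_minus Phi (fun t => exp k * Phi (t - h))). apply Phi_deriv.
  assert (H2 : is_derive (fun t : R => t - h) t 1) by (auto_derive; auto; ring).
  assert (H := is_derive_comp Phi (fun t => t - h) t _ _ (Phi_deriv (t - h)) H2).
  assert (H3 := is_derive_scal _ t (exp k) _ H).
  eapply is_derive_ext; [intros u; reflexivity|].
  replace (exp k * npdf (t - h)) with (scal (exp k) (scal 1 (npdf (t - h)))).
  exact H3.
  unfold scal; simpl; unfold mult; simpl. ring.
Qed.

Lemma df_nonneg k h t : k + t * h - h * h / 2 <= 0 -> 0 <= npdf t - exp k * npdf (t - h).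
Proof.
  intros H. rewrite npdf_shift.
  assert (exp (k + t * h - h * h / 2) <= 1).
  { rewrite <- exp_0. apply exp_le. lra. }
  generalize (npdf_pos t). nra.
Qed.

Lemma df_nonpos k h t : 0 <= k + t * h - h * h / 2 -> npdf t - exp k * npdf (t - h) <= 0.
Proof.
  intros H. rewrite npdf_shift.
  assert (1 <= exp (k + t * h - h * h / 2)).
  { rewrite <- exp_0. apply exp_le. lra. }
  generalize (npdf_pos t). nra.
Qed.

Lemma exp_pos' k : 0 < exp k.
Proof. apply exp_pos. Qed.

Lemma part1 k s x y : 0 < s -> Phi x - exp k * Phi y = C_BS k s -> s <= x - y.
Proof.
  intros Hs E.
  set (d := d1 k s).
  assert (Hd : d * s = - k + s * s / 2) by (unfold d, d1; field; lra).
  assert (C : C_BS k s = Phi d - exp k * Phi (d - s)).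
  { unfold C_BS. fold d. f_equal. f_equal. f_equal. unfold d2, d, d1. field. lra. }
  set (f := fun t => Phi t - exp k * Phi (t - s)).
  assert (Hf : f x <= f d).
  { destruct (Rle_dec x d) as [H|H].
    - apply (deriv_mono f (fun t => npdf t - exp k * npdf (t - s))); auto.
      + intros; apply f_deriv.
      + intros; apply df_cont.
      + intros t Ht. apply df_nonneg. nra.
    - apply (deriv_anti f (fun t => npdf t - exp k * npdf (t - s))); try lra.
      + intros; apply f_deriv.
      + intros; apply df_cont.
      + intros t Ht. apply df_nonpos. nra. }
  unfold f in Hf. rewrite <- C, <- E in Hf.
  assert (Phi y <= Phi (x - s)).
  { apply Rmult_le_reg_l with (exp k). apply exp_pos. lra. }
  apply Phi_le_inv in H. lra.
Qed.

Lemma part_mono k x y x' y' :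
  Phi x - exp k * Phi y = Phi x' - exp k * Phi y' -> x <= x' -> y < x ->
  0 <= k + x * (x - y) - (x - y) * (x - y) / 2 -> x - y <= x' - y'.
Proof.
  intros E xx yx C.
  set (h := x - y).
  set (f := fun t => Phi t - exp k * Phi (t - h)).
  assert (Hf : f x' <= f x).
  { apply (deriv_anti f (fun t => npdf t - exp k * npdf (t - h))); auto.
    + intros; apply f_deriv.
    + intros; apply df_cont.
    + intros t Ht. apply df_nonpos. unfold h in *. nra. }
  unfold f in Hf. replace (x - h) with y in Hf by (unfold h; ring).
  rewrite E in Hf.
  assert (Phi y' <= Phi (x' - h)).
  { apply Rmult_le_reg_l with (exp k). apply exp_pos. lra. }
  apply Phi_le_inv in H. lra.
Qed.

Lemma tail_cmp k x3 : 0 <= k -> 0 <= x3 ->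
  exp k * Phi (- sqrt (x3 * x3 + 2 * k)) <= Phi (- x3).
Proof.
  intros hk hx.
  set (z := sqrt (x3 * x3 + 2 * k)).
  assert (z0 : 0 <= z) by apply sqrt_pos.
  assert (zz : z * z = x3 * x3 + 2 * k) by (apply sqrt_sqrt; nra).
  assert (zx : x3 <= z) by nra.
  set (h := z - x3).
  set (f := fun t => Phi t - exp k * Phi (t - h)).
  assert (Hm : forall a, a <= - x3 -> f a <= f (- x3)).
  { intros a Ha. apply (deriv_mono f (fun t => npdf t - exp k * npdf (t - h))); auto.
    + intros; apply f_deriv.
    + intros; apply df_cont.
    + intros t Ht. apply df_nonneg. unfold h. nra. }
  assert (Hz : - x3 - h = - z) by (unfold h; ring).
  destruct (Rle_lt_dec 0 (f (- x3))) as [H|H].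
  - unfold f in H. rewrite Hz in H. lra.
  - exfalso.
    assert (ek := exp_pos k).
    destruct (Phi_lim_minf (- f (- x3) / exp k)) as [M HM].
    { apply Rdiv_lt_0_compat; lra. }
    set (a := Rmin (- x3) (M + h) - 1).
    assert (a1 : a <= - x3) by (unfold a; generalize (Rmin_l (- x3) (M + h)); lra).
    assert (a2 : a - h < M) by (unfold a; generalize (Rmin_r (- x3) (M + h)); lra).
    specialize (Hm a a1). specialize (HM _ a2).
    assert (exp k * Phi (a - h) < - f (- x3)).
    { apply Rmult_lt_compat_l with (r := exp k) in HM; auto.
      replace (exp k * (- f (- x3) / exp k)) with (- f (- x3)) in HM by (field; lra). exact HM. }
    generalize (Phi_pos a). unfold f in *. lra.
Qed.

Lemma gen_D k c D : 0 <= k -> c < D < 1 -> 0 < c ->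
  Phi (Phi_inv D) = D /\ Phi (Phi_inv ((D - c) / exp k)) = (D - c) / exp k /\
  Phi (Phi_inv D) - exp k * Phi (Phi_inv ((D - c) / exp k)) = c /\
  Phi_inv ((D - c) / exp k) < Phi_inv D /\ (D - c) / exp k <= D - c.
Proof.
  intros hk HD hc.
  assert (ek1 : 1 <= exp k) by (rewrite <- exp_0; apply exp_le; lra).
  set (q := (D - c) / exp k).
  assert (qe : q * exp k = D - c) by (unfold q; field; lra).
  assert (q0 : 0 < q) by nra.
  assert (q1 : q <= D - c) by nra.
  assert (E1 : Phi (Phi_inv D) = D) by (apply Phi_inv_spec; lra).
  assert (E2 : Phi (Phi_inv q) = q) by (apply Phi_inv_spec; lra).
  repeat split; auto.
  - rewrite E1, E2. lra.
  - apply Phi_lt_inv. rewrite E1, E2. lra.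
Qed.

Theorem corollary4p1 (k c : R) (hk : 0 <= k) (hc0 : 0 < c) (hc1 : c < 1) :
  (forall sigma : R, 0 < sigma -> C_BS k sigma = c -> sigma <= U23 k c) /\
  (c < 1 - exp k * Phi (- sqrt (2 * k)) -> U23 k c = Rmin (U2 k c) (U3 k c)) /\
  (~ (c < 1 - exp k * Phi (- sqrt (2 * k))) -> U23 k c = U3 k c).
Proof.
  assert (ek1 : 1 <= exp k) by (rewrite <- exp_0; apply exp_le; lra).
  set (a := Phi (- sqrt (2 * k))).
  assert (a0 : 0 < a) by apply Phi_pos.
  set (D2 := c + exp k * a).
  set (D3 := (1 + c) / 2).
  assert (D2c : c < D2) by (unfold D2; nra).
  assert (D3c : c < D3 < 1) by (unfold D3; lra).
  assert (HD3 : H k c D3 = U3 k c).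
  { unfold H, U3.
    set (u := Phi_inv ((1 - c) / 2)).
    assert (Pu : Phi u = (1 - c) / 2) by (apply Phi_inv_spec; lra).
    assert (Pmu : Phi (- u) = D3) by (rewrite Phi_sym, Pu; unfold D3; field).
    rewrite <- Pmu, Phi_inv_Phi.
    replace ((Phi (- u) - c) / exp k) with ((1 - c) / (2 * exp k)).
    ring. rewrite Pmu. unfold D3. field. generalize (exp_pos k); lra. }
  assert (HD2 : D2 < 1 -> H k c D2 = U2 k c).
  { intros _. unfold H, U2.
    replace ((D2 - c) / exp k) with a by (unfold D2; field; generalize (exp_pos k); lra).
    unfold a. rewrite Phi_inv_Phi. fold a. unfold D2. ring. }
  assert (U23E : U23 k c = H k c (Rmin D3 D2)) by reflexivity.
  split; [|split].
  - intros s hs E.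
    rewrite U23E.
    assert (Hm : c < Rmin D3 D2 < 1).
    { split. apply Rmin_glb_lt; lra. eapply Rle_lt_trans; [apply Rmin_l|lra]. }
    destruct (gen_D k c (Rmin D3 D2) hk Hm hc0) as [_ [_ [E3 _]]].
    unfold H. apply part1 with k. auto. rewrite E3. auto.
  - intros Hc. assert (D21 : D2 < 1) by (unfold D2; lra).
    destruct (gen_D k c D2 hk (conj D2c D21) hc0) as [P2 [Q2 [E2 [L2 R2]]]].
    destruct (gen_D k c D3 hk D3c hc0) as [P3 [Q3 [E3 [L3 R3]]]].
    set (x2 := Phi_inv D2) in *. set (y2 := Phi_inv ((D2 - c) / exp k)) in *.
    set (x3 := Phi_inv D3) in *. set (y3 := Phi_inv ((D3 - c) / exp k)) in *.
    assert (Hy2 : y2 = - sqrt (2 * k)).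
    { unfold y2. replace ((D2 - c) / exp k) with a by (unfold D2; field; generalize (exp_pos k); lra).
      unfold a. apply Phi_inv_Phi. }
    assert (s2 : sqrt (2 * k) * sqrt (2 * k) = 2 * k) by (apply sqrt_sqrt; lra).
    rewrite U23E, <- (HD2 D21), <- HD3.
    unfold H. fold x2 y2 x3 y3.
    destruct (Rle_lt_dec D2 D3) as [Hle|Hlt].
    + rewrite Rmin_right by lra. fold x2 y2.
      rewrite Rmin_left; auto.
      apply part_mono with k. rewrite E2, E3; auto.
      apply Phi_le_inv. rewrite P2, P3. auto. auto.
      rewrite Hy2. nra.
    + rewrite Rmin_left by lra. fold x3 y3.
      rewrite Rmin_right; auto.
      assert (x30 : 0 < x3) by (apply Phi_lt_inv; rewrite Phi0, P3; unfold D3; lra).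
      assert (y3x : y3 <= - x3).
      { apply Phi_le_inv. rewrite Phi_sym, P3, Q3. unfold D3 in *. lra. }
      assert (T := tail_cmp k x3 hk (Rlt_le _ _ x30)).
      set (z := sqrt (x3 * x3 + 2 * k)) in *.
      assert (z0 : 0 <= z) by apply sqrt_pos.
      assert (zz : z * z = x3 * x3 + 2 * k) by (apply sqrt_sqrt; nra).
      assert (zy : - z <= y3).
      { apply Phi_le_inv. apply Rmult_le_reg_l with (exp k). apply exp_pos.
        rewrite Q3. rewrite (Phi_sym x3), P3 in T.
        replace (exp k * ((D3 - c) / exp k)) with (D3 - c) by (field; generalize (exp_pos k); lra).
        unfold D3 in *. lra. }
      apply part_mono with k. rewrite E2, E3; auto.
      apply Phi_le_inv. rewrite P2, P3. lra. auto.
      nra.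
  - intros Hc. assert (D21 : 1 <= D2) by (unfold D2; lra).
    rewrite U23E, Rmin_left by lra. exact HD3.
Qed.
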